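(* Let $g\in\mathbb{R}^d$ with $\|g\|=1$, and let $R,C,B,\eta>0$ with $R<1$ and $C>B$. For $w,r\in\mathbb{R}^d$ let $F(w,r)=\eta\|g+r\|^2-2\langle w,g+r\rangle$, and let $$F^*=\max\{F(w,r):\ \langle g,w\rangle\ge B,\ \|r\|^2\le R^2,\ \|w\|^2\le C^2\}.$$ Then $$F^*\le\max\left\{\eta(1+R^2)+2R\sqrt{\eta^2+C^2-2\eta B}-2B,\ \eta(R^2-1)\right\}.$$
   Context: $\|\cdot\|$ denotes the Euclidean norm and $\langle\cdot,\cdot\rangle$ the Euclidean inner product on $\mathbb{R}^d$. *)

(* Defs.v *)
From HB Require Import structures.
From mathcomp Require Import all_boot all_order all_algebra.
Set Implicit Arguments. Unset Strict Implicit. Unset Printing Implicit Defensive.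
Import Order.TTheory GRing.Theory Num.Theory.
Local Open Scope ring_scope.

Definition dotv (R : rcfType) (d : nat) (u v : 'rV[R]_d) : R :=
  \sum_(i < d) u 0 i * v 0 i.

Definition enorm (R : rcfType) (d : nat) (u : 'rV[R]_d) : R :=
  Num.sqrt (dotv u u).

Definition Fobj (R : rcfType) (d : nat) (eta : R) (g w r : 'rV[R]_d) : R :=
  eta * enorm (g + r) ^+ 2 - 2 * dotv w (g + r).

(* Main.v *)
Require Import Defs.
From HB Require Import structures.
From mathcomp Require Import all_boot all_order all_algebra.
From mathcomp Require Import ring lra.
Import Order.TTheory GRing.Theory Num.Theory.
Local Open Scope ring_scope.

Set Implicit Arguments.
Section Aux.
Variables (R : rcfType) (d : nat).
Implicit Types u v x : 'rV[R]_d.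

Lemma dotvC u v : dotv u v = dotv v u.
Proof. by apply: eq_bigr => i _; rewrite mulrC. Qed.

Lemma dotvDl u v x : dotv (u + v) x = dotv u x + dotv v x.
Proof. by rewrite /dotv -big_split; apply: eq_bigr => i _; rewrite mxE mulrDl. Qed.

Lemma dotvBl u v x : dotv (u - v) x = dotv u x - dotv v x.
Proof.
rewrite /dotv -sumrB; apply: eq_bigr => i _; rewrite !mxE; ring.
Qed.

Lemma dotvZl (a : R) u x : dotv (a *: u) x = a * dotv u x.
Proof. by rewrite /dotv mulr_sumr; apply: eq_bigr => i _; rewrite mxE mulrA. Qed.

Lemma dotvDr u v x : dotv x (u + v) = dotv x u + dotv x v.
Proof. by rewrite dotvC dotvDl !(dotvC x). Qed.

Lemma dotvBr u v x : dotv x (u - v) = dotv x u - dotv x v.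
Proof. by rewrite dotvC dotvBl !(dotvC x). Qed.

Lemma dotvZr (a : R) u x : dotv x (a *: u) = a * dotv x u.
Proof. by rewrite dotvC dotvZl dotvC. Qed.

Lemma dotv_ge0 u : 0 <= dotv u u.
Proof. by apply: sumr_ge0 => i _; rewrite -expr2 sqr_ge0. Qed.

Lemma enorm_sq u : enorm u ^+ 2 = dotv u u.
Proof. by rewrite /enorm sqr_sqrtr // dotv_ge0. Qed.

Lemma lagrange u v :
  \sum_(i < d) \sum_(j < d) (u 0 i * v 0 j - u 0 j * v 0 i) ^+ 2 =
  2 * (dotv u u * dotv v v - dotv u v ^+ 2).
Proof.
have E : forall i j : 'I_d, (u 0 i * v 0 j - u 0 j * v 0 i) ^+ 2 =
  (u 0 i * u 0 i) * (v 0 j * v 0 j) + (u 0 j * u 0 j) * (v 0 i * v 0 i)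
  - 2 * ((u 0 i * v 0 i) * (u 0 j * v 0 j)) by move=> i j; ring.
under eq_bigr => i _ do under eq_bigr => j _ do rewrite E.
rewrite /dotv.
have L : forall i : 'I_d, \sum_(j < d) ((u 0 i * u 0 i) * (v 0 j * v 0 j) + (u 0 j * u 0 j) * (v 0 i * v 0 i)
  - 2 * ((u 0 i * v 0 i) * (u 0 j * v 0 j))) =
  (u 0 i * u 0 i) * (\sum_(j < d) v 0 j * v 0 j) + (\sum_(j < d) u 0 j * u 0 j) * (v 0 i * v 0 i)
  - 2 * ((u 0 i * v 0 i) * (\sum_(j < d) u 0 j * v 0 j)).
  move=> i; rewrite sumrB big_split /= mulr_sumr mulr_suml mulr_sumr mulr_sumr.
  by congr (_ + _ - _); apply: eq_bigr => j _; rewrite mulrA.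
under eq_bigr => i _ do rewrite L.
rewrite sumrB big_split /= -mulr_suml -!mulr_sumr -mulr_suml.
rewrite expr2; ring.
Qed.

Lemma cauchy_schwarz u v : dotv u v ^+ 2 <= dotv u u * dotv v v.
Proof.
have H := lagrange u v.
have : 0 <= 2 * (dotv u u * dotv v v - dotv u v ^+ 2).
  by rewrite -H; apply: sumr_ge0 => i _; apply: sumr_ge0 => j _; apply: sqr_ge0.
move=> h; nra.
Qed.

End Aux.
Arguments dotvC {R d}.
Arguments dotv_ge0 {R d}.
Arguments cauchy_schwarz {R d}.
Arguments enorm_sq {R d}.

Theorem lemma7p1 (R : rcfType) (d : nat) (g : 'rV[R]_d) (Rr C B eta : R) :
  enorm g = 1 -> 0 < Rr -> 0 < C -> 0 < B -> 0 < eta -> Rr < 1 -> B < C ->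
  forall w r : 'rV[R]_d,
    B <= dotv g w -> enorm r ^+ 2 <= Rr ^+ 2 -> enorm w ^+ 2 <= C ^+ 2 ->
    Fobj eta g w r <=
      Num.max (eta * (1 + Rr ^+ 2) + 2 * Rr * Num.sqrt (eta ^+ 2 + C ^+ 2 - 2 * eta * B) - 2 * B)
              (eta * (Rr ^+ 2 - 1)).
Proof.
move=> hg hR hC hB he hR1 hBC w r hgw hr hw.
have gg : dotv g g = 1 by rewrite -enorm_sq hg expr1n.
rewrite enorm_sq in hr; rewrite enorm_sq in hw.
set v := eta *: g - w.
have vv : dotv v v = eta ^+ 2 - 2 * eta * dotv g w + dotv w w.
  rewrite /v !(dotvBl, dotvBr, dotvZl, dotvZr) gg (dotvC w g); ring.
have vr : dotv v r = eta * dotv g r - dotv w r.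
  by rewrite /v dotvBl dotvZl.
set S := Num.sqrt (eta ^+ 2 + C ^+ 2 - 2 * eta * B).
have vS : dotv v v <= S ^+ 2.
  rewrite /S sqr_sqrtr; last by apply: le_trans (dotv_ge0 v) _; rewrite vv; nra.
  rewrite vv; nra.
have S0 : 0 <= S by apply: sqrtr_ge0.
have cs := cauchy_schwarz v r.
have v0 := dotv_ge0 v. have r0 := dotv_ge0 r.
have h1 : dotv v r ^+ 2 <= (S * Rr) ^+ 2.
  apply: le_trans cs _; rewrite exprMn; apply: ler_pM => //.
have h2 : dotv v r <= S * Rr.
  have : 0 <= S * Rr by apply: mulr_ge0 => //; apply: ltW.
  move=> h; nra.
rewrite /Fobj enorm_sq.
have -> : dotv (g + r) (g + r) = 1 + 2 * dotv g r + dotv r r.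
  rewrite !(dotvDl, dotvDr) gg (dotvC r g); ring.
rewrite dotvDr (dotvC w g).
rewrite le_max; apply/orP; left.
nra.
Qed.
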